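(* Let $\gamma\in C^{2}(\mathbb{R})$ be either an odd or an even function which is convex on $(0,\infty)$ and satisfies: (i) $\gamma(0)=\gamma'(0)=0$; (ii) $\frac{\gamma''(t)}{\gamma'(t)}$ is decreasing on $(0,\infty)$; (iii) there is a constant $C_1>0$ with $\frac{t\gamma''(t)}{\gamma'(t)}\geq C_1$ for all $t\in(0,\infty)$; (iv) $\gamma''$ is monotone on $(0,\infty)$. Fix $x,y\in\mathbb{R}$, a real number $\omega>0$ and an integer $k\geq 0$, and for $z$ with $1\leq z-y<z-x\leq 2$ set $$\Upsilon(z):=\frac{\gamma(\omega 2^k (z-x))-\gamma(\omega 2^k(z-y))}{\omega 2^k\gamma'(\omega 2^k(z-x))-\omega 2^k\gamma'(\omega 2^k(z-y))}.$$ Then $\Upsilon$ is increasing on the set $\{z:1\leq z-y<z-x\leq 2\}$, and $\Upsilon(z)\leq \frac{2}{C_1}$ on this set, uniformly in $\omega$ and $k$. *)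

(* Defs.v *)
From Stdlib Require Import Reals.
From Coquelicot Require Import Coquelicot.
Open Scope R_scope.

Definition C2 (g : R -> R) : Prop :=
  (forall t, ex_derive g t) /\
  (forall t, ex_derive (Derive g) t) /\
  (forall t, continuous (Derive (Derive g)) t).

Definition odd_fun (g : R -> R) : Prop := forall t, g (- t) = - g t.
Definition even_fun (g : R -> R) : Prop := forall t, g (- t) = g t.

Definition convex_pos (g : R -> R) : Prop :=
  forall a b l, 0 < a -> 0 < b -> 0 <= l <= 1 ->
    g (l * a + (1 - l) * b) <= l * g a + (1 - l) * g b.

Definition decreasing_pos (f : R -> R) : Prop :=
  forall s t, 0 < s -> s <= t -> f t <= f s.
Definition increasing_pos (f : R -> R) : Prop :=
  forall s t, 0 < s -> s <= t -> f s <= f t.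

Definition in_Zset (x y z : R) : Prop := 1 <= z - y /\ z - y < z - x /\ z - x <= 2.

Definition Upsilon (g : R -> R) (omega : R) (k : nat) (x y z : R) : R :=
  let lam := omega * 2 ^ k in
  (g (lam * (z - x)) - g (lam * (z - y))) /
  (lam * Derive g (lam * (z - x)) - lam * Derive g (lam * (z - y))).

(* Main.v *)
Require Import Defs.
From Stdlib Require Import Reals.
From Coquelicot Require Import Coquelicot.
From Stdlib Require Import Lra Psatz.
Open Scope R_scope.

Lemma cont_of_ex (f : R -> R) t : ex_derive f t -> continuity_pt f t.
Proof. intro H. apply continuity_pt_filterlim. exact (@ex_derive_continuous R_AbsRing R_NormedModule f t H). Qed.

Theorem lemma3p2 (gamma : R -> R) (C1 : R) :
  C2 gamma ->
  (odd_fun gamma \/ even_fun gamma) ->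
  convex_pos gamma ->
  gamma 0 = 0 -> Derive gamma 0 = 0 ->
  decreasing_pos (fun t => Derive (Derive gamma) t / Derive gamma t) ->
  0 < C1 ->
  (forall t, 0 < t -> t * Derive (Derive gamma) t / Derive gamma t >= C1) ->
  (increasing_pos (Derive (Derive gamma)) \/ decreasing_pos (Derive (Derive gamma))) ->
  forall (x y omega : R) (k : nat), 0 < omega ->
    (forall z1 z2, in_Zset x y z1 -> in_Zset x y z2 -> z1 <= z2 ->
       Upsilon gamma omega k x y z1 <= Upsilon gamma omega k x y z2) /\
    (forall z, in_Zset x y z -> Upsilon gamma omega k x y z <= 2 / C1).
Proof.
  intros [Hd1 [Hd2 Hc2]] _ _ _ _ Hdec HC1 Hiii _ x y om k Hom.
  assert (Hq : forall t, 0 < t -> 0 < Derive (Derive gamma) t / Derive gamma t).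
  { intros t Ht. specialize (Hiii t Ht).
    assert (E : t * Derive (Derive gamma) t / Derive gamma t
              = t * (Derive (Derive gamma) t / Derive gamma t)) by (unfold Rdiv; ring).
    rewrite E in Hiii.
    destruct (Rle_or_lt (Derive (Derive gamma) t / Derive gamma t) 0) as [H|H]; [|exact H].
    assert (t * (Derive (Derive gamma) t / Derive gamma t) <= 0).
    { apply Rmult_le_0_l; lra. }
    lra. }
  assert (Hnz : forall t, 0 < t -> Derive gamma t <> 0 /\ Derive (Derive gamma) t <> 0).
  { intros t Ht. specialize (Hq t Ht). split; intro E; rewrite E in Hq; unfold Rdiv in Hq.
    - rewrite Rinv_0, Rmult_0_r in Hq; lra.
    - rewrite Rmult_0_l in Hq; lra. }
  assert (Hsign : forall s t, 0 < s -> 0 < t ->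
             0 < Derive (Derive gamma) s * Derive (Derive gamma) t).
  { intros s t Hs Ht.
    destruct (Rle_or_lt (Derive (Derive gamma) s * Derive (Derive gamma) t) 0) as [H|H]; [|exact H].
    exfalso.
    assert (Hc : continuity (Derive (Derive gamma))).
    { intro u. apply continuity_pt_filterlim. apply Hc2. }
    destruct (IVT_gen _ s t 0 Hc) as [w [Hw Hw0]].
    { unfold Rmin, Rmax; destruct (Rle_dec _ _); nra. }
    assert (0 < w).
    { revert Hw; unfold Rmin, Rmax; destruct (Rle_dec _ _); lra. }
    apply (proj2 (Hnz w H0)); exact Hw0. }
  pose (r := fun t => Derive gamma t / Derive (Derive gamma) t).
  assert (Hr : forall s t, 0 < s -> s <= t -> r s <= r t).
  { intros s t Hs Hst. unfold r.
    destruct (Hnz s Hs) as [A1 A2]. destruct (Hnz t ltac:(lra)) as [B1 B2].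
    rewrite <- (Rinv_div (Derive (Derive gamma) s)), <- (Rinv_div (Derive (Derive gamma) t)).
    apply Rinv_le_contravar. apply Hq; lra. apply (Hdec s t Hs Hst). }
  assert (Hrb : forall t, 0 < t -> r t <= t / C1).
  { intros t Ht. specialize (Hiii t Ht). specialize (Hq t Ht). unfold r.
    destruct (Hnz t Ht) as [A1 A2].
    rewrite <- (Rinv_div (Derive (Derive gamma) t)).
    set (q := Derive (Derive gamma) t / Derive gamma t) in *.
    assert (E : t * Derive (Derive gamma) t / Derive gamma t = t * q) by (unfold q, Rdiv; ring).
    rewrite E in Hiii.
    apply (Rmult_le_reg_l (q * C1)). nra.
    replace (q * C1 * / q) with C1 by (field; lra).
    replace (q * C1 * (t / C1)) with (t * q) by (field; lra). lra. }
  assert (Hgr : forall t, 0 < t -> Derive gamma t = r t * Derive (Derive gamma) t).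
  { intros t Ht. unfold r. destruct (Hnz t Ht). field. auto. }
  assert (Hcau : forall u v, 0 < u -> u < v -> exists c, u <= c <= v /\
     (gamma v - gamma u) * Derive (Derive gamma) c = (Derive gamma v - Derive gamma u) * Derive gamma c).
  { intros u v Hu Huv.
    set (A := gamma v - gamma u). set (B := Derive gamma v - Derive gamma u).
    destruct (MVT_gen (fun t => A * Derive gamma t - B * gamma t) u v
       (fun t => A * Derive (Derive gamma) t - B * Derive gamma t)) as [c [Hc E]].
    - intros t _. auto_derive. split; auto.
      change (fun x : R => Derive gamma x) with (Derive gamma);
        change (fun x : R => gamma x) with gamma; ring.
    - intros t _. apply cont_of_ex. auto_derive. auto.
    - exists c. rewrite Rmin_left, Rmax_right in Hc by lra. split; [exact Hc|].
      assert (E2 : A * Derive gamma v - B * gamma v - (A * Derive gamma u - B * gamma u) = 0)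
        by (unfold A, B; ring).
      rewrite E2 in E.
      assert (A * Derive (Derive gamma) c - B * Derive gamma c = 0).
      { symmetry in E. apply Rmult_integral in E. destruct E; lra. }
      lra. }
  assert (Hmvt : forall u v, 0 < u -> u < v -> exists d, u <= d <= v /\
     Derive gamma v - Derive gamma u = Derive (Derive gamma) d * (v - u)).
  { intros u v Hu Huv.
    destruct (MVT_gen (Derive gamma) u v (Derive (Derive gamma))) as [c [Hc E]].
    - intros t _. apply Derive_correct. auto.
    - intros t _. apply cont_of_ex. auto.
    - exists c. rewrite Rmin_left, Rmax_right in Hc by lra. auto. }
  pose (l := om * 2 ^ k).
  assert (Hl : 0 < l). { unfold l. apply Rmult_lt_0_compat; auto. apply pow_lt; lra. }
  assert (Hkey : forall b a, 0 < b -> b < a ->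
    let D := Derive gamma a - Derive gamma b in
    let N := gamma a - gamma b in
    D <> 0 /\ D * D - N * (Derive (Derive gamma) a - Derive (Derive gamma) b) >= 0 /\
    exists c, b <= c <= a /\ N = D * r c).
  { intros b a Hb Hba D N.
    destruct (Hcau b a Hb Hba) as [c [Hc Ec]].
    destruct (Hmvt b a Hb Hba) as [d [Hd Ed]].
    fold D in Ed. fold N D in Ec.
    destruct (Hnz c ltac:(lra)) as [C1' C2'].
    destruct (Hnz d ltac:(lra)) as [D1' D2'].
    assert (HDnz : D <> 0).
    { rewrite Ed. apply Rmult_integral_contrapositive. split; auto. lra. }
    assert (EN : N = D * r c).
    { unfold r. apply (Rmult_eq_reg_r (Derive (Derive gamma) c)); auto.
      rewrite Ec. field. auto. }
    split; [exact HDnz|]. split; [|exists c; split; [lra|exact EN]].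
    assert (Ea := Hgr a ltac:(lra)). assert (Eb := Hgr b ltac:(lra)).
    assert (P1 := Hsign d a ltac:(lra) ltac:(lra)).
    assert (P2 := Hsign d b ltac:(lra) ltac:(lra)).
    assert (R1 := Hr c a ltac:(lra) ltac:(lra)).
    assert (R2 := Hr b c ltac:(lra) ltac:(lra)).
    assert (E : D * D - N * (Derive (Derive gamma) a - Derive (Derive gamma) b)
      = (a - b) * ((Derive (Derive gamma) d * Derive (Derive gamma) a) * (r a - r c)
           + (Derive (Derive gamma) d * Derive (Derive gamma) b) * (r c - r b))).
    { rewrite EN. rewrite Ed at 1.
      assert (D = r a * Derive (Derive gamma) a - r b * Derive (Derive gamma) b).
      { unfold D. rewrite Ea, Eb. ring. }
      rewrite H at 1. rewrite Ed. ring. }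
    rewrite E. apply Rle_ge. apply Rmult_le_pos; [lra|].
    apply Rplus_le_le_0_compat; apply Rmult_le_pos; lra. }
  split.
  - intros z1 z2 [H1 [H2 H3]] [H4 [H5 H6]] Hz.
    destruct (Rle_lt_or_eq_dec _ _ Hz) as [Hz'|Hz']; [|subst; lra].
    set (G := Upsilon gamma om k x y).
    set (Gd := fun z =>
      let a := l * (z - x) in let b := l * (z - y) in
      (l * l * ((Derive gamma a - Derive gamma b) * (Derive gamma a - Derive gamma b)
        - (gamma a - gamma b) * (Derive (Derive gamma) a - Derive (Derive gamma) b)))
      / (l * Derive gamma a - l * Derive gamma b) ^ 2).
    assert (HG : forall z, 0 < z - y -> is_derive G z (Gd z) /\ 0 <= Gd z).
    { intros z Hzy.
      assert (Hb : 0 < l * (z - y)) by (apply Rmult_lt_0_compat; lra).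
      assert (Hba : l * (z - y) < l * (z - x)) by (apply Rmult_lt_compat_l; lra).
      destruct (Hkey _ _ Hb Hba) as [HD [Hpos _]].
      assert (HD' : l * Derive gamma (l * (z - x)) - l * Derive gamma (l * (z - y)) <> 0).
      { replace (l * Derive gamma (l * (z - x)) - l * Derive gamma (l * (z - y)))
          with (l * (Derive gamma (l * (z - x)) - Derive gamma (l * (z - y)))) by ring.
        apply Rmult_integral_contrapositive; split; lra. }
      split.
      - unfold G, Gd, Upsilon. fold l. auto_derive.
        + repeat split; auto.
        + change (fun x : R => Derive gamma x) with (Derive gamma);
            change (fun x : R => gamma x) with gamma.
          replace (l * (z + - x)) with (l * (z - x)) by ring.
          replace (l * (z + - y)) with (l * (z - y)) by ring.
          field. exact HD'.
      - unfold Gd. cbv zeta. apply Rmult_le_pos.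
        + apply Rmult_le_pos; [nra|lra].
        + apply Rlt_le, Rinv_0_lt_compat. apply pow2_gt_0. exact HD'. }
    destruct (MVT_gen G z1 z2 Gd) as [c [Hc E]].
    + intros t Ht. rewrite Rmin_left, Rmax_right in Ht by lra. apply HG; lra.
    + intros t Ht. rewrite Rmin_left, Rmax_right in Ht by lra.
      apply cont_of_ex. eexists. apply HG; lra.
    + rewrite Rmin_left, Rmax_right in Hc by lra.
      assert (0 <= Gd c) by (apply HG; lra). fold G. nra.
  - intros z [H1 [H2 H3]].
    assert (Hb : 0 < l * (z - y)) by (apply Rmult_lt_0_compat; lra).
    assert (Hba : l * (z - y) < l * (z - x)) by (apply Rmult_lt_compat_l; lra).
    destruct (Hkey _ _ Hb Hba) as [HD [_ [c [Hc EN]]]].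
    unfold Upsilon. fold l. rewrite EN.
    replace (l * Derive gamma (l * (z - x)) - l * Derive gamma (l * (z - y)))
      with (l * (Derive gamma (l * (z - x)) - Derive gamma (l * (z - y)))) by ring.
    replace ((Derive gamma (l * (z - x)) - Derive gamma (l * (z - y))) * r c /
       (l * (Derive gamma (l * (z - x)) - Derive gamma (l * (z - y))))) with (r c / l)
      by (field; split; lra).
    assert (Hrc := Hrb c ltac:(lra)).
    apply (Rmult_le_reg_l l); auto.
    replace (l * (r c / l)) with (r c) by (field; lra).
    apply (Rle_trans _ (c / C1)); auto.
    apply (Rle_trans _ (l * (z - x) / C1)).
    + unfold Rdiv. apply Rmult_le_compat_r; [apply Rlt_le, Rinv_0_lt_compat; lra | lra].
    + unfold Rdiv. rewrite Rmult_assoc. apply Rmult_le_compat_l; [lra|].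
      apply Rmult_le_compat_r; [apply Rlt_le, Rinv_0_lt_compat; lra | lra].
Qed.
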